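(* For each $n\ge 1$ let $G_n$ be a random graph with $n$ vertices drawn from a given class of random graphs. Let $d_{n,k}$ be the probability that a uniformly randomly selected vertex of $G_n$ has degree $k$, and let $d_{n,k,\ell}$ be the probability that two different uniformly randomly selected (ordered) vertices of $G_n$ have degrees $k$ and $\ell$, respectively. Suppose that: 1. There exists a limiting degree distribution $(\overline d_k)_{k\ge1}$ with $\log \overline d_k \sim k\log q$ as $k\to\infty$, where $q$ is a real constant with $0<q<1$. 2. As $n\to\infty$, $k\to\infty$, $\ell\to\infty$, and uniformly for $k,\ell\le C\log n$ (for an arbitrary constant $C>0$), $d_{n,k}\sim \overline d_k$ and $d_{n,k,\ell}\sim \overline d_k\,\overline d_\ell$. 3. There exists $\overline q<1$ such that, uniformly for all $n,k,\ell\ge1$, $d_{n,k}=O(\overline q^{\,k})$ and $d_{n,k,\ell}=O(\overline q^{\,k+\ell})$. Let $\Delta_n$ be the maximum degree of $G_n$. Then $\Delta_n/\log n \to 1/\log(1/q)$ in probability, and $\mathbb{E}\,\Delta_n \sim \frac{1}{\log(1/q)}\log n$ as $n\to\infty$. *)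

(* Defs.v *)
From HB Require Import structures.
From mathcomp Require Import all_boot all_order all_algebra.
From mathcomp Require Import all_classical all_reals all_analysis.
Set Implicit Arguments. Unset Strict Implicit. Unset Printing Implicit Defensive.
Import Order.TTheory GRing.Theory Num.Theory.
Import numFieldNormedType.Exports.
Local Open Scope ring_scope.

(* A graph on the vertex set 'I_n is given by its (directed) edge set;
   it is a simple graph when this set is symmetric and irreflexive. *)
Definition graph (n : nat) := {set ('I_n * 'I_n)}.

Definition simple_graph (n : nat) (E : graph n) : bool :=
  [forall u, forall v, ((u, v) \in E) == ((v, u) \in E)] &&
  [forall u, (u, u) \notin E].

Definition deg (n : nat) (E : graph n) (v : 'I_n) : nat :=
  #|[set w | (v, w) \in E]|.

Definition maxdeg (n : nat) (E : graph n) : nat := \max_(v : 'I_n) deg E v.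

Definition random_graph (R : realType) (n : nat) (P : {ffun graph n -> R}) : Prop :=
  (forall E, 0 <= P E) /\ (\sum_(E : graph n) P E = 1) /\
  (forall E, P E != 0 -> simple_graph E).

Definition prob (R : realType) (n : nat) (P : {ffun graph n -> R})
  (A : pred (graph n)) : R := \sum_(E : graph n | A E) P E.

Definition expect (R : realType) (n : nat) (P : {ffun graph n -> R})
  (X : graph n -> R) : R := \sum_(E : graph n) P E * X E.

(* d_{n,k}: probability that a uniformly random vertex has degree k *)
Definition dnk (R : realType) (n : nat) (P : {ffun graph n -> R}) (k : nat) : R :=
  expect P (fun E => #|[set v : 'I_n | deg E v == k]|%:R) / n%:R.

(* d_{n,k,l}: probability that two distinct uniformly random ordered vertices
   have degrees k and l respectively *)
Definition dnkl (R : realType) (n : nat) (P : {ffun graph n -> R}) (k l : nat) : R :=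
  expect P (fun E => #|[set uv : 'I_n * 'I_n |
                        [&& uv.1 != uv.2, deg E uv.1 == k & deg E uv.2 == l]]|%:R)
  / (n * n.-1)%:R.

(* Main.v *)
Require Import Defs.
From HB Require Import structures.
From mathcomp Require Import all_boot all_order all_algebra.
From mathcomp Require Import all_classical all_reals all_analysis.
From mathcomp Require Import zify ring lra.
Import Order.TTheory GRing.Theory Num.Theory.
Import numFieldNormedType.Exports.
Set Implicit Arguments. Unset Strict Implicit.
Local Open Scope ring_scope.

Definition Nk (n : nat) (E : graph n) (k : nat) : nat := #|[set v : 'I_n | deg E v == k]|.

Lemma deg_le n (E : graph n) v : (deg E v <= n)%N.
Proof. rewrite /deg. by rewrite -[X in (_ <= X)%N](card_ord n) max_card. Qed.

Lemma maxdeg_le n (E : graph n) : (maxdeg E <= n)%N.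
Proof. by apply/bigmax_leqP => i _; exact: deg_le. Qed.

Lemma maxdeg_sum n (E : graph n) k : (k <= maxdeg E)%N ->
  (maxdeg E <= \sum_(k <= j < n.+1) j * Nk E j)%N.
Proof.
move=> Hk.
case: n E Hk => [|n] E Hk; first by rewrite /maxdeg big_ord0.
have Hn : (0 < #|'I_n.+1|)%N by rewrite card_ord.
have [v Hv] := bigop.eq_bigmax (deg E) Hn.
rewrite /maxdeg Hv.
have Hj : (deg E v < n.+2)%N by rewrite ltnS deg_le.
have Hkj : (k <= deg E v)%N by rewrite -Hv.
rewrite (bigD1_seq (deg E v)) /=; last exact: iota_uniq.
2: by rewrite mem_index_iota Hkj Hj.
have : (1 <= Nk E (deg E v))%N.
  by rewrite /Nk card_gt0; apply/set0Pn; exists v; rewrite inE.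
move=> H1.
have H2 : (deg E v <= deg E v * Nk E (deg E v))%N.
  by rewrite -{1}[deg E v]muln1 leq_mul2l H1 orbT.
lia.
Qed.


Lemma Nk_maxdeg n (E : graph n) k : (maxdeg E < k)%N -> Nk E k = 0%N.
Proof.
move=> H; rewrite /Nk; apply/eqP; rewrite cards_eq0; apply/eqP/setP => v.
rewrite !inE; apply/negbTE; apply/eqP => Hv.
have := leq_bigmax (F := deg E) v; rewrite -/(maxdeg E) Hv.
by rewrite leqNgt H.
Qed.
Lemma pairs_card n (E : graph n) k :
  (#|[set uv : 'I_n * 'I_n | [&& uv.1 != uv.2, deg E uv.1 == k & deg E uv.2 == k]]|
   + Nk E k = Nk E k * Nk E k)%N.
Proof.
set S := [set v : 'I_n | deg E v == k].
rewrite /Nk -/S -cardsX.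
rewrite -(cardsID [set uv : 'I_n * 'I_n | uv.1 == uv.2] (finset.setX S S)).
rewrite addnC; congr (_ + _)%N.
- rewrite -(@card_imset _ _ (fun v => (v,v)) S); last by move=> x y [].
  apply: eq_card => uv; rewrite !inE.
  apply/imsetP/idP.
  + by move=> [v Hv ->] /=; move: Hv; rewrite inE => ->; rewrite eqxx.
  + case: uv => u w /= /andP[/andP[Hu Hw] /eqP Huw]; subst w.
    by exists u; rewrite ?inE.
- apply: eq_card => uv; rewrite !inE; case: uv => u w /=.

  by case: (u == w); case: (deg E u == k); case: (deg E w == k).
Qed.


Section Prob.
Variables (R : realType) (n : nat) (P : {ffun graph n -> R}).
Hypothesis HP : random_graph P.

Lemma P_ge0 E : 0 <= P E. Proof. by case: HP. Qed.
Lemma P_sum : \sum_E P E = 1. Proof. by case: HP => _ []. Qed.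

Lemma expect_le (f g : graph n -> R) : (forall E, f E <= g E) -> expect P f <= expect P g.
Proof. move=> H; apply: ler_sum => E _; apply: ler_wpM2l; [exact: P_ge0|exact: H]. Qed.

Lemma expect_ge0 (f : graph n -> R) : (forall E, 0 <= f E) -> 0 <= expect P f.
Proof. move=> H; apply: sumr_ge0 => E _; apply: mulr_ge0; [exact: P_ge0|exact: H]. Qed.

Lemma expectD (f g : graph n -> R) : expect P (fun E => f E + g E) = expect P f + expect P g.
Proof. by rewrite /expect -big_split; apply: eq_bigr => E _; rewrite mulrDr. Qed.

Lemma expectZ c (f : graph n -> R) : expect P (fun E => c * f E) = c * expect P f.
Proof. by rewrite /expect mulr_sumr; apply: eq_bigr => E _; rewrite mulrCA. Qed.

Lemma expect_cst c : expect P (fun _ => c) = c.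
Proof. by rewrite /expect -mulr_suml P_sum mul1r. Qed.

Lemma expect_sum (I : Type) (r : seq I) (F : I -> graph n -> R) :
  expect P (fun E => \sum_(i <- r) F i E) = \sum_(i <- r) expect P (F i).
Proof.
rewrite /expect (eq_bigr (fun E => \sum_(i <- r) P E * F i E)); last first.
  by move=> E _; rewrite mulr_sumr.
by rewrite exchange_big.
Qed.

Lemma prob_expect (A : pred (graph n)) : prob P A = expect P (fun E => (A E)%:R).
Proof.
rewrite /prob /expect big_mkcond /=; apply: eq_bigr => E _.
by case: (A E); rewrite ?mulr1 ?mulr0.
Qed.

Lemma prob_le_expect (A : pred (graph n)) (f : graph n -> R) :
  (forall E, 0 <= f E) -> (forall E, A E -> 1 <= f E) -> prob P A <= expect P f.
Proof.
move=> H0 H1; rewrite prob_expect; apply: expect_le => E.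
by case HA: (A E) => //=; exact: H1.
Qed.

Lemma prob_ge0 (A : pred (graph n)) : 0 <= prob P A.
Proof. by rewrite prob_expect; apply: expect_ge0 => E; case: (A E). Qed.

Lemma prob_mono (A B : pred (graph n)) : (forall E, A E -> B E) -> prob P A <= prob P B.
Proof.
move=> H; rewrite !prob_expect; apply: expect_le => E.
by case HA: (A E); rewrite ?(H _ HA) //=; case: (B E).
Qed.

Lemma expect_Nk j : (1 <= n)%N -> expect P (fun E => (Nk E j)%:R) = n%:R * dnk P j.
Proof.
move=> Hn; rewrite /dnk mulrC divfK // pnatr_eq0; lia.
Qed.

Lemma dnk_ge0 j : 0 <= dnk P j.
Proof. by rewrite /dnk divr_ge0 // expect_ge0. Qed.

Lemma expect_pairs k : (2 <= n)%N ->
  expect P (fun E => (#|[set uv : 'I_n * 'I_n |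
     [&& uv.1 != uv.2, deg E uv.1 == k & deg E uv.2 == k]]|)%:R) = (n * n.-1)%:R * dnkl P k k.
Proof.
move=> Hn; rewrite /dnkl mulrC divfK // pnatr_eq0 muln_eq0; apply/norP; split; lia.
Qed.

Lemma cheb (X : graph n -> R) : 0 < expect P X ->
  prob P (fun E => X E == 0) <=
  (expect P (fun E => X E ^+ 2) - expect P X ^+ 2) / expect P X ^+ 2.
Proof.
move=> Hmu; set mu := expect P X.
have Hmu2 : 0 < mu ^+ 2 by rewrite exprn_gt0.
apply: (@le_trans _ _ (expect P (fun E => (X E - mu) ^+ 2 / mu ^+ 2))).
  apply: prob_le_expect => E.
    by rewrite divr_ge0 // sqr_ge0.
  move/eqP => ->; rewrite sub0r sqrrN divff //; exact: lt0r_neq0.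
have -> : (fun E => (X E - mu) ^+ 2 / mu ^+ 2) =
  (fun E => (mu ^+ 2)^-1 * X E ^+ 2 + ((- (2 * mu) / mu ^+ 2) * X E + mu ^+ 2 / mu ^+ 2)).
  by apply: funext => E; rewrite /= !mulrDl; ring.
rewrite !expectD !expectZ expect_cst -/mu.
rewrite le_eqVlt; apply/orP; left; apply/eqP.
field. by rewrite lt0r_neq0.
Qed.
End Prob.


Local Open Scope classical_set_scope.
Local Open Scope ring_scope.

Section Conv.
Variable R : realType.

Lemma cvg_ev (f : nat -> R) (y : R) : f @ \oo --> y ->
  forall eps : R, 0 < eps -> exists N, forall n, (N <= n)%N -> `|y - f n| <= eps.
Proof.
move/cvgrPdist_le => H eps Heps; have [N _ HN] := H eps Heps.
by exists N => n Hn; exact: HN.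
Qed.

Lemma ev_cvg (f : nat -> R) (y : R) :
  (forall eps : R, 0 < eps -> exists N, forall n, (N <= n)%N -> `|y - f n| <= eps) ->
  f @ \oo --> y.
Proof.
move=> H; apply/cvgrPdist_le => eps Heps; have [N HN] := H eps Heps.
by exists N => // n /= Hn; exact: HN.
Qed.

Lemma ev_ln (T : R) : exists N, forall n, (N <= n)%N -> T <= ln n%:R.
Proof.
exists (Num.trunc (expR T)).+1 => n Hn.
have H1 : expR T < n%:R.
  apply: (lt_le_trans (truncnS_gt _)); rewrite ler_nat //.
rewrite -[X in X <= _]expRK; rewrite ler_ln ?posrE ?expR_gt0 //.
  exact: ltW.
exact: lt_trans (expR_gt0 _) H1.
Qed.

End Conv.


Section Main.
Variables (R : realType) (P : forall n : nat, {ffun graph n -> R}) (dbar : nat -> R) (q : R).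
Hypothesis Hq : 0 < q < 1.
Hypothesis Hpos : exists K, forall k, (K <= k)%N -> 0 < dbar k.
Hypothesis Hlog : (fun k => ln (dbar k) / (k%:R * ln q)) @ \oo --> (1:R).

Lemma a_gt0 : 0 < - ln q.
Proof. by rewrite oppr_gt0 ln_lt0. Qed.

Lemma dbar_bounds (d : R) : 0 < d -> exists K, forall k, (K <= k)%N ->
  [/\ 0 < dbar k, expR (- ((1 + d) * (- ln q) * k%:R)) <= dbar k &
      dbar k <= expR (- ((1 - d) * (- ln q) * k%:R))].
Proof.
move=> Hd; have [N HN] := cvg_ev Hlog Hd; have [K0 HK0] := Hpos.
exists (maxn (maxn N K0) 1) => k Hk.
have HD : 0 < dbar k by apply: HK0; lia.
have Hk0 : 0 < k%:R :> R by rewrite ltr0n; lia.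
have Ha := a_gt0.
have Hx : 0 < - ln q * k%:R by rewrite mulr_gt0.
have := HN k ltac:(lia); set t := ln (dbar k) / _ => Ht.
have Hl : ln (dbar k) = - (t * (- ln q * k%:R)).
  rewrite /t mulNr mulrN opprK [ln q * _]mulrC divfK //.
  rewrite mulf_eq0 negb_or lt0r_neq0 //=; apply: ltr0_neq0; lra.
move: Ht; rewrite ler_norml => /andP[H1 H2].
split => //; rewrite -[dbar k]lnK ?posrE // ler_expR Hl.
- rewrite lerN2 mulrA; apply: ler_wpM2r; [exact: ltW|].
  apply: ler_wpM2r; [exact: ltW|lra].
- rewrite lerN2 mulrA; apply: ler_wpM2r; [exact: ltW|].
  apply: ler_wpM2r; [exact: ltW|lra].
Qed.
End Main.


Section Aux.
Variable R : realType.

Lemma geo_eq (r : R) m d : (1 - r) * \sum_(m <= j < m + d) r ^+ j = r ^+ m - r ^+ (m + d).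
Proof.
elim: d => [|d IH]; first by rewrite addn0 big_geq // mulr0 subrr.
rewrite addnS big_nat_recr /=; last lia.
by rewrite mulrDr IH exprS; ring.
Qed.

Lemma geo_le (r : R) m N : 0 <= r < 1 -> \sum_(m <= j < N) r ^+ j <= r ^+ m / (1 - r).
Proof.
move=> /andP[H0 H1].
have H1r : 0 < 1 - r by lra.
case: (leqP N m) => HN.
  by rewrite big_geq // divr_ge0 ?exprn_ge0 // ltW.
have -> : N = (m + (N - m))%N by lia.
rewrite ler_pdivlMr // mulrC geo_eq lerBlDr lerDl exprn_ge0 //.
Qed.

Lemma xexp_le (g x : R) : 0 < g -> 0 < x -> x * expR (- (g * x)) <= 2 / (g ^+ 2 * x).
Proof.
move=> Hg Hx.
have Hgx : 0 < g * x by rewrite mulr_gt0.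
have H := expR_ge1Dxn 1 (ltW Hgx).
have He : (g * x) ^+ 2 / 2 <= expR (g * x).
  apply: le_trans H; rewrite (_ : (1.+1)`!%:R = 2 :> R) //.
  by rewrite lerDr.
rewrite expRN.
have Hp : 0 < (g * x) ^+ 2 / 2 by rewrite divr_gt0 // exprn_gt0.
have Hexp : 0 < expR (g * x) := expR_gt0 _.
rewrite -[x * _^-1]/(x / expR (g * x)) ler_pdivrMr // .
apply: le_trans (_ : 2 / (g ^+ 2 * x) * ((g * x) ^+ 2 / 2) <= _).
  rewrite le_eqVlt; apply/orP; left; apply/eqP; field.
  by rewrite !lt0r_neq0.
by apply: ler_wpM2l => //; rewrite divr_ge0 // ltW // mulr_gt0 // exprn_gt0.
Qed.

End Aux.


Lemma ar1 (R : realType) (M n eta : R) : 4 * M * n <= n * eta * n -> M * 1 <= M * n ->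
  M * (n + 1) <= eta / 2 * (n * n).
Proof. move=> h1 h2; nra. Qed.
Lemma ar2 (R : realType) (C u L eta : R) : 8 * C <= L * (u * eta) -> 4 * C <= eta / 2 * (u * L).
Proof. move=> h; nra. Qed.

Lemma ar3 (R : realType) (C L n x y : R) : y != 0 -> 2*C*L*n*(x/y) = 2*C/y*(L*(n*x)).
Proof. by move=> h; field. Qed.
Lemma ar4 (R : realType) (C y g L : R) : y * g ^+ 2 * L != 0 ->
  2 * C / y * (2 / (g ^+ 2 * L)) = 4 * C / (y * g ^+ 2 * L).
Proof.
move=> h; field.
move: h; rewrite !mulf_eq0 !negb_or => /andP[/andP[hy hg] hL].
by rewrite hL hy andbT /=; apply/eqP => hg0; move: hg; rewrite hg0 eqxx.
Qed.

Section Up.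
Variables (R : realType) (P : forall n : nat, {ffun graph n -> R}) (dbar : nat -> R) (q : R).
Hypothesis HP : forall n, (1 <= n)%N -> random_graph (P n).
Hypothesis Hq : 0 < q < 1.
Hypothesis Hpos : exists K, forall k, (K <= k)%N -> 0 < dbar k.
Hypothesis Hlog : (fun k => ln (dbar k) / (k%:R * ln q)) @ \oo --> (1:R).
Hypothesis H2a : forall C : R, 0 < C -> forall eps : R, 0 < eps ->
     exists N K : nat, forall n k, (N <= n)%N -> (K <= k)%N ->
       k%:R <= C * ln n%:R ->
       `|dnk (P n) k - dbar k| <= eps * dbar k.
Hypothesis H3 : exists qbar : R, 0 < qbar < 1 /\ exists M : R,
     (forall n k, (1 <= n)%N -> (1 <= k)%N -> `|dnk (P n) k| <= M * qbar ^+ k) /\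
     (forall n k l, (1 <= n)%N -> (1 <= k)%N -> (1 <= l)%N ->
        `|dnkl (P n) k l| <= M * qbar ^+ (k + l)).

Definition Ssum n k := \sum_(k <= j < n.+1) j%:R * (n%:R * dnk (P n) j).

Lemma up (c : R) : 1 < c * (- ln q) -> forall eta : R, 0 < eta ->
  exists N, forall n, (N <= n)%N -> Ssum n (Num.trunc (c * ln n%:R)).+1 <= eta.
Proof.
move=> Hc eta Heta.
set a := - ln q; have Ha : 0 < a := a_gt0 Hq.
have aE : a = - ln q by []. clearbody a. rewrite -aE in Hc.
have Hca : 0 < c * a := lt_trans ltr01 Hc.
have Hc0 : 0 < c by rewrite -(pmulr_lgt0 _ Ha).

set d := (c * a - 1) / (2 * (c * a)).
have Hd : 0 < d by rewrite /d divr_gt0 //; [rewrite subr_gt0 | rewrite mulr_gt0].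
have Hd1 : d < 1.
  by rewrite /d ltr_pdivrMr ?mulr_gt0 //; lra.
set g := (c * a - 1) / 2.
have Hg : 0 < g by rewrite /g divr_gt0 //; lra.
set r := (1 - d) * a.
have Hr : 0 < r by rewrite /r mulr_gt0 //; lra.
have Hrc : r * c = 1 + g.
  by rewrite /r /d /g; field; rewrite !lt0r_neq0.
have rE : r = (1 - d) * a by [].
clearbody r g d.
set rho := expR (- r).
have Hrho0 : 0 < rho := expR_gt0 _.
have Hrho1 : rho < 1 by rewrite /rho expR_lt1; lra.
case: H3 => qb [/andP[Hqb0 Hqb1] [M [HM1 _]]].
set b := - ln qb.
have Hb : 0 < b by rewrite /b oppr_gt0 ln_lt0 // Hqb0.
have HM0 : 0 <= M.
  have := HM1 1%N 1%N erefl erefl; rewrite expr1 => H.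
  by rewrite -(pmulr_lge0 _ Hqb0); apply: le_trans H.
set C := 4 / b.
have HC : 0 < C by rewrite /C divr_gt0.
have [N1 [K1 H1]] := H2a HC ltr01.
have [K2 HK2] := dbar_bounds Hq Hpos Hlog Hd.
rewrite -aE in HK2.
have [NL1 HL1] := ev_ln (8 * C / ((1 - rho) * g ^+ 2 * eta)).
have [NL2 HL2] := ev_ln ((K1 + K2)%:R / c).
have [NL3 HL3] := ev_ln (R := R) 1.
set NM := (Num.trunc (4 * M / eta)).+1.
exists (maxn (maxn (maxn N1 NL1) (maxn NL2 NL3)) (maxn NM 1)) => n.
rewrite !geq_max => /andP[/andP[/andP[HnN1 HnL1] /andP[HnL2 HnL3]] /andP[HnM Hn1]].
set L := ln n%:R; set k0 := (Num.trunc (c * L)).+1.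
have HL : 1 <= L by apply: HL3.
have HnR : 0 < n%:R :> R by rewrite ltr0n.
have HnL : n%:R = expR L by rewrite /L lnK // posrE.
have Hk0 : c * L < k0%:R by apply: truncnS_gt.
have Hk0K : (K1 + K2 <= k0)%N.
  have := HL2 n HnL2; rewrite ler_pdivrMr // => H.
  have : (K1 + K2)%:R < k0%:R :> R by apply: le_lt_trans Hk0; rewrite mulrC.
  by rewrite ltr_nat => /ltnW.
have Hterm : forall j, (k0 <= j < n.+1)%N ->
    j%:R * (n%:R * dnk (P n) j) <= 2 * C * L * n%:R * rho ^+ j + M / n%:R ^+ 2.
  move=> j /andP[Hj0 Hj1].
  have Hj1' : (1 <= j)%N by apply: leq_trans Hj0.
  have HPn := HP Hn1.
  have Hdnk0 := dnk_ge0 HPn j.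
  have HjR : 0 <= j%:R :> R by [].
  have HjnR : j%:R <= n%:R :> R by rewrite ler_nat -ltnS.
  have Hsm : 0 <= M / n%:R ^+ 2 by rewrite divr_ge0 // exprn_ge0 // ltW.
  have HL0 : 0 < L by apply: lt_le_trans HL.
  case: (lerP (j%:R) (C * L)) => Hj.
  - have HK2j : (K2 <= j)%N by apply: leq_trans (leq_addl K1 K2) (leq_trans Hk0K Hj0).
    have HK1j : (K1 <= j)%N by apply: leq_trans (leq_addr K2 K1) (leq_trans Hk0K Hj0).
    have [HD0 _ HDup] := HK2 j HK2j.
    have := H1 n j HnN1 HK1j Hj; rewrite mul1r ler_norml => /andP[_ Hd2].
    have Hdn : dnk (P n) j <= 2 * rho ^+ j.
      rewrite /rho -expRM_natl.
      have -> : j%:R * - r = - ((1 - d) * a * j%:R) by rewrite rE; ring.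
      lra.
    have E1 : j%:R * (n%:R * dnk (P n) j) <= C * L * (n%:R * (2 * rho ^+ j)).
      apply: ler_pM => //; first by rewrite mulr_ge0 // ltW.
      by apply: ler_pM => //; exact: ltW.
    apply: le_trans E1 _.
    rewrite (_ : C * L * (n%:R * (2 * rho ^+ j)) = 2 * C * L * n%:R * rho ^+ j); last by ring.
    by rewrite lerDl.
  - have Habs := HM1 n j Hn1 Hj1'.
    have Hqj : qb ^+ j <= (n%:R ^+ 4)^-1.
      rewrite -[qb]lnK ?posrE // -expRM_natl HnL -expRM_natl -expRN.
      rewrite ler_expR.
      have -> : j%:R * ln qb = - (b * j%:R) by rewrite /b; ring.
      have -> : - (4%:R * L) = - (b * (C * L)) by rewrite /C; field; exact: lt0r_neq0.
      rewrite lerN2; apply: ler_wpM2l; [exact: ltW | exact: ltW].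
    have Hdn : dnk (P n) j <= M * (n%:R ^+ 4)^-1.
      apply: le_trans (ler_norm _) (le_trans Habs _).
      by apply: ler_wpM2l.
    have E1 : j%:R * (n%:R * dnk (P n) j) <= n%:R * (n%:R * (M * (n%:R ^+ 4)^-1)).
      apply: ler_pM => //; first by rewrite mulr_ge0 // ltW.
      by apply: ler_wpM2l => //; exact: ltW.
    apply: le_trans E1 _.
    rewrite (_ : n%:R * (n%:R * (M * (n%:R ^+ 4)^-1)) = M / n%:R ^+ 2); last first.
      by field; exact: lt0r_neq0.
    rewrite lerDr; apply: mulr_ge0; last exact: exprn_ge0 (ltW _).
    by rewrite !mulr_ge0 // ?(ltW HC) ?(ltW HL0) ?(ltW HnR) // invr_ge0 ltW.
rewrite /Ssum.
apply: le_trans (ler_sum_nat Hterm) _.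
rewrite big_split /= -mulr_sumr sumr_const_nat.
have HL0 : 0 < L by apply: lt_le_trans HL.
have Hgeo : \sum_(k0 <= j < n.+1) rho ^+ j <= rho ^+ k0 / (1 - rho).
  by apply: geo_le; rewrite (ltW Hrho0) Hrho1.
have Hrk : rho ^+ k0 <= expR (- ((1 + g) * L)).
  rewrite /rho -expRM_natl ler_expR -Hrc.
  rewrite mulrN lerN2 -mulrA [k0%:R * r]mulrC ler_pM2l //; exact: ltW.
have Hnexp : n%:R * expR (- ((1 + g) * L)) = expR (- (g * L)).
  by rewrite HnL -expRD; congr expR; ring.
have Hx := xexp_le Hg HL0.
have H1r : 0 < 1 - rho by rewrite subr_gt0.
have HCr : 0 <= 2 * C / (1 - rho).
  by apply: divr_ge0; [apply: mulr_ge0 => //; exact: ltW | exact: ltW].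
clearbody C rho b.
have Hfirst : 2 * C * L * n%:R * \sum_(k0 <= i < n.+1) rho ^+ i <= eta / 2.
  apply: le_trans (_ : 2 * C * L * n%:R * (rho ^+ k0 / (1 - rho)) <= _).
    apply: ler_wpM2l Hgeo; apply: mulr_ge0; [apply: mulr_ge0; [apply: mulr_ge0 => //|]|]; exact: ltW.
  apply: le_trans (_ : 2 * C / (1 - rho) * (L * expR (- (g * L))) <= _).
    rewrite -Hnexp.
    rewrite (_ : 2 * C * L * n%:R * (rho ^+ k0 / (1 - rho)) =
                 2 * C / (1 - rho) * (L * (n%:R * rho ^+ k0))); last first.
      by apply: ar3; exact: lt0r_neq0.
    apply: ler_wpM2l => //; apply: ler_wpM2l; first exact: ltW.
    by apply: ler_wpM2l => //; exact: ltW.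
  apply: le_trans (_ : 2 * C / (1 - rho) * (2 / (g ^+ 2 * L)) <= _).
    by apply: ler_wpM2l.
  have := HL1 n HnL1.
  have Hu : 0 < (1 - rho) * g ^+ 2 by rewrite mulr_gt0 // exprn_gt0.
  rewrite (_ : 2 * C / (1 - rho) * (2 / (g ^+ 2 * L)) = 4 * C / ((1 - rho) * g ^+ 2 * L)); last first.
    by apply: ar4; rewrite lt0r_neq0 // mulr_gt0.
  move: Hu; set u := (1 - rho) * g ^+ 2 => Hu.
  rewrite ler_pdivrMr ?mulr_gt0 // -/L => HL1'.
  rewrite ler_pdivrMr ?mulr_gt0 //.
  exact: ar2 HL1'.
have Hsecond : M / n%:R ^+ 2 *+ (n.+1 - k0) <= eta / 2.
  rewrite -mulr_natr.
  apply: le_trans (_ : M / n%:R ^+ 2 * (n%:R + 1) <= _).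
    apply: ler_wpM2l; first by rewrite divr_ge0 // exprn_ge0 // ltW.
    by rewrite natr1 ler_nat leq_subr.
  have HnM' : 4 * M / eta < n%:R.
    by apply: lt_le_trans (truncnS_gt _) _; rewrite ler_nat; exact: HnM.
  rewrite ltr_pdivrMr // in HnM'.
  have Hn1R : 1 <= n%:R :> R by rewrite ler1n.
  rewrite (_ : M / n%:R ^+ 2 * (n%:R + 1) = (M * (n%:R + 1)) / n%:R ^+ 2); last first.
    by rewrite mulrAC.
  rewrite ler_pdivrMr ?exprn_gt0 //.
  have h1 : 4 * M * n%:R <= n%:R * eta * n%:R by apply: ler_wpM2r; [exact: ltW|exact: ltW].
  have h2 : M * 1 <= M * n%:R by apply: ler_wpM2l.
  rewrite expr2; exact: ar1 h1 h2.
apply: le_trans (lerD Hfirst Hsecond) _.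
by rewrite [X in _ <= X](splitr eta).
Qed.
End Up.


Lemma ar_e (R : realType) (e eta : R) : 0 < e -> e <= 1/4 -> e * 12 <= eta ->
  1 + e <= (1 + eta / 2) * (1 - e) ^+ 2.
Proof. move=> h0 h1 h2; rewrite expr2; nra. Qed.

Lemma ar_low (R : realType) (A mu x e eta : R) : 0 < x -> 0 < e -> e <= 1/4 -> e * 12 <= eta ->
  A <= (1 + e) * x ^+ 2 -> (1 - e) * x <= mu -> 2 / eta <= mu ->
  (A + mu - mu ^+ 2) / mu ^+ 2 <= eta.
Proof.
move=> hx he he1 he2 hA hmu hmu2.
have heta : 0 < eta by apply: lt_le_trans he2; rewrite mulr_gt0.
have hmu0 : 0 < mu by apply: lt_le_trans hmu; rewrite mulr_gt0 //; lra.
have hmu2' : 0 < mu ^+ 2 by rewrite exprn_gt0.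
have h1 : (1 - e) ^+ 2 * x ^+ 2 <= mu ^+ 2.
  rewrite -exprMn; apply: lerXn2r; rewrite ?nnegrE //; last exact: ltW.
  by rewrite mulr_ge0 // ?ltW //; lra.
have h2 := ar_e he he1 he2.
have h3 : A <= (1 + eta / 2) * mu ^+ 2.
  apply: le_trans hA _.
  apply: le_trans (_ : (1 + eta / 2) * ((1 - e) ^+ 2 * x ^+ 2) <= _).
    by rewrite [X in _ <= X]mulrA ler_pM2r ?exprn_gt0.
  apply: ler_wpM2l => //; lra.
have h4 : 1 / mu <= eta / 2.
  rewrite ler_pdivrMr //.
  have : eta / 2 * (2 / eta) <= eta / 2 * mu by rewrite ler_pM2l // divr_gt0.
  rewrite (_ : eta / 2 * (2 / eta) = 1) //; field; exact: lt0r_neq0.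
rewrite (_ : (A + mu - mu ^+ 2) / mu ^+ 2 = A / mu ^+ 2 + 1 / mu - 1); last first.
  by field; rewrite lt0r_neq0.
have h5 : A / mu ^+ 2 <= 1 + eta / 2 by rewrite ler_pdivrMr.
lra.
Qed.

Lemma ar5 (R : realType) (c a : R) : 0 < c -> 0 < a ->
  (1 + (1 - c * a) / (2 * (c * a))) * a * c = 1 - (1 - c * a) / 2.
Proof. by move=> h1 h2; field; rewrite !lt0r_neq0. Qed.

Lemma ar6 (R : realType) (x D e : R) : - (e * D) <= x - D -> (1 - e) * D <= x.
Proof. move=> h; lra. Qed.
Lemma ar7 (R : realType) (x D e : R) : x - D <= e * D -> x <= (1 + e) * D.
Proof. move=> h; lra. Qed.
Lemma ar8 (R : realType) (u v w e eta : R) : 0 < eta -> e <= 1/4 -> 4 / eta <= v -> v <= w ->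
  (1 - e) * w <= u -> 2 / eta <= u.
Proof.
move=> h0 h1 h2 h3 h4.
have h5 : 2 / eta = (1/2) * (4 / eta) by field; rewrite lt0r_neq0.
have h6 : 0 <= 4 / eta by rewrite divr_ge0 // ltW.
rewrite h5; apply: le_trans h4; nra.
Qed.

Lemma ar9 (R : realType) (e : R) : e <= 1/4 -> 0 < 1 - e.
Proof. move=> h; lra. Qed.

Section Low.
Variables (R : realType) (P : forall n : nat, {ffun graph n -> R}) (dbar : nat -> R) (q : R).
Hypothesis HP : forall n, (1 <= n)%N -> random_graph (P n).
Hypothesis Hq : 0 < q < 1.
Hypothesis Hpos : exists K, forall k, (K <= k)%N -> 0 < dbar k.
Hypothesis Hlog : (fun k => ln (dbar k) / (k%:R * ln q)) @ \oo --> (1:R).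
Hypothesis H2a : forall C : R, 0 < C -> forall eps : R, 0 < eps ->
     exists N K : nat, forall n k, (N <= n)%N -> (K <= k)%N ->
       k%:R <= C * ln n%:R ->
       `|dnk (P n) k - dbar k| <= eps * dbar k.
Hypothesis H2b : forall C : R, 0 < C -> forall eps : R, 0 < eps ->
     exists N K : nat, forall n k l, (N <= n)%N -> (K <= k)%N -> (K <= l)%N ->
       k%:R <= C * ln n%:R -> l%:R <= C * ln n%:R ->
       `|dnkl (P n) k l - dbar k * dbar l| <= eps * (dbar k * dbar l).

Lemma low (c : R) : 0 < c -> c * (- ln q) < 1 -> forall eta : R, 0 < eta ->
  exists N, forall n, (N <= n)%N ->
    prob (P n) (fun E => (maxdeg E < (Num.trunc (c * ln n%:R)).+1)%N) <= eta.
Proof.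
move=> Hc0 Hc eta Heta.
set a := - ln q; have Ha : 0 < a := a_gt0 Hq.
have aE : a = - ln q by []. clearbody a. rewrite -aE in Hc.
have Hca : 0 < c * a by rewrite mulr_gt0.
set d := (1 - c * a) / (2 * (c * a)).
have Hd : 0 < d by rewrite /d divr_gt0 ?subr_gt0 // mulr_gt0.
set g := (1 - c * a) / 2.
have Hg : 0 < g by rewrite /g divr_gt0 ?subr_gt0.
set s := (1 + d) * a.
have Hsc : s * c = 1 - g by rewrite /s /d /g ar5.
have sE : s = (1 + d) * a by [].
clearbody s g d.
set e := eta / (12 + 4 * eta).
have He0 : 0 < e by rewrite /e divr_gt0 // addr_gt0 // mulr_gt0.
have He1 : e <= 1/4.
  rewrite /e ler_pdivrMr ?addr_gt0 ?mulr_gt0 //.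
  rewrite mulrDr; lra.
have He2 : e * 12 <= eta.
  rewrite /e mulrAC ler_pdivrMr ?addr_gt0 ?mulr_gt0 //.
  rewrite mulrDr; nra.
clearbody e.
have H2c : 0 < 2 * c by rewrite mulr_gt0.
have [N1 [K1 H1]] := H2a H2c He0.
have [N2 [K2 H2]] := H2b H2c He0.
have [K3 HK3] := dbar_bounds Hq Hpos Hlog Hd.
rewrite -aE in HK3.
have [NL1 HL1] := ev_ln (c^-1).
have [NL2 HL2] := ev_ln ((K1 + K2 + K3)%:R / c).
have [NL3 HL3] := ev_ln (4 / (eta * g * expR (- s))).
exists (maxn (maxn (maxn N1 N2) (maxn NL1 NL2)) (maxn NL3 2)) => n.
rewrite !geq_max => /andP[/andP[/andP[HnN1 HnN2] /andP[HnL1 HnL2]] /andP[HnL3 Hn2]].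
set L := ln n%:R; set k := (Num.trunc (c * L)).+1.
have Hn1 : (1 <= n)%N by apply: leq_trans Hn2.
have HPn := HP Hn1.
have HnR : 0 < n%:R :> R by rewrite ltr0n.
have HnL : n%:R = expR L by rewrite /L lnK // posrE.
have HcL1 : 1 <= c * L.
  by have H := HL1 n HnL1; apply: le_trans (ler_wpM2l (ltW Hc0) H); rewrite divff // lt0r_neq0.
have HL0 : 0 < L.
  by rewrite -(pmulr_rgt0 _ Hc0); apply: lt_le_trans HcL1.
have Hk0 : c * L < k%:R by apply: truncnS_gt.
have Hk1 : k%:R <= c * L + 1.
  rewrite /k -natr1 lerD2r truncn_le; exact: ltW (lt_le_trans ltr01 HcL1).
have Hk2 : k%:R <= 2 * c * L by apply: le_trans Hk1 _; rewrite -mulrA; lra.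
have HkK : (K1 + K2 + K3 <= k)%N.
  have := HL2 n HnL2; rewrite ler_pdivrMr // => H.
  have : (K1 + K2 + K3)%:R < k%:R :> R by apply: le_lt_trans Hk0; rewrite mulrC.
  by rewrite ltr_nat => /ltnW.
have HK1 : (K1 <= k)%N by apply: leq_trans HkK; rewrite -addnA leq_addr.
have HK2 : (K2 <= k)%N by apply: leq_trans HkK; rewrite addnAC leq_addl.
have HK3k : (K3 <= k)%N by apply: leq_trans HkK; rewrite leq_addl.
have [HD0 HDlo _] := HK3 k HK3k.
have := H1 n k HnN1 HK1 Hk2; rewrite ler_norml => /andP[Hd1 _].
have := H2 n k k HnN2 HK2 HK2 Hk2 Hk2; rewrite ler_norml => /andP[_ Hd2].
rewrite -sE in HDlo.
move: HD0 HDlo Hd1 Hd2; set D := dbar k => HD0 HDlo Hd1 Hd2.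
have Hmu := expect_Nk (P n) k Hn1.
move: Hmu; set mu := n%:R * dnk (P n) k => Hmu.
have HnD : (1 - e) * (n%:R * D) <= mu.
  by rewrite mulrCA ler_pM2l //; exact: ar6.
have HnDlow : expR (- s) * (g * L) <= n%:R * D.
  apply: le_trans (_ : n%:R * expR (- (s * k%:R)) <= _); last by rewrite ler_pM2l.
  have Hs0 : 0 < s by rewrite sE mulr_gt0 // addr_gt0.
  apply: le_trans (_ : n%:R * expR (- (s * (c * L + 1))) <= _); last first.
    by rewrite ler_pM2l // ler_expR lerN2 ler_pM2l.
  rewrite HnL -expRD.
  have -> : L + - (s * (c * L + 1)) = g * L + - s.
    by rewrite mulrDr mulr1 mulrA Hsc; ring.
  rewrite expRD mulrC ler_pM2r ?expR_gt0 //.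
  by apply: le_trans (expR_ge1Dx _); rewrite lerDr.
have HL3' := HL3 n HnL3.
have Hx4 : 4 / eta <= expR (- s) * (g * L).
  move: HL3'; rewrite ler_pdivrMr ?mulr_gt0 ?expR_gt0 // => H.
  rewrite ler_pdivrMr //.
  by rewrite (_ : expR (- s) * (g * L) * eta = L * (eta * g * expR (- s))) //; ring.
have Hmu2 : 2 / eta <= mu by apply: ar8 Heta He1 Hx4 HnDlow HnD.
have HnD0 : 0 < n%:R * D by rewrite mulr_gt0.
have Hmu0 : 0 < mu.
  apply: lt_le_trans HnD; rewrite mulr_gt0 //.
  exact: ar9 He1.
apply: le_trans (prob_mono HPn (B := fun E => (Nk E k)%:R == 0 :> R) _) _.
  by move=> E HE; rewrite Nk_maxdeg.
apply: le_trans (cheb HPn (X := fun E => (Nk E k)%:R) _) _.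
  by rewrite Hmu.
have HX2 : expect (P n) (fun E => (Nk E k)%:R ^+ 2) = (n * n.-1)%:R * dnkl (P n) k k + mu.
  rewrite -Hmu -expect_pairs // -expectD; congr expect; apply: funext => E /=.
  by rewrite expr2 -natrM -pairs_card natrD.
rewrite HX2 Hmu.
apply: (ar_low HnD0 He0 He1 He2 _ HnD Hmu2).
have Hd2' := ar7 Hd2.
have HDD : 0 <= (1 + e) * (D * D).
  apply: mulr_ge0; first exact: addr_ge0 ler01 (ltW He0).
  exact: mulr_ge0 (ltW HD0) (ltW HD0).
apply: le_trans (_ : (n * n.-1)%:R * ((1 + e) * (D * D)) <= _).
  by apply: ler_wpM2l.
rewrite (_ : (1 + e) * (n%:R * D) ^+ 2 = (n * n)%:R * ((1 + e) * (D * D))); last first.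
  by rewrite natrM; ring.
by apply: ler_wpM2r => //; rewrite ler_nat leq_mul2l leq_pred orbT.
Qed.
End Low.


Lemma expect_S (R : realType) (P : forall n : nat, {ffun graph n -> R}) n k : (1 <= n)%N ->
  expect (P n) (fun E => (\sum_(k <= j < n.+1) (j * Nk E j))%:R) = Ssum P n k.
Proof.
move=> Hn.
under eq_fun do rewrite natr_sum.
rewrite expect_sum /Ssum; apply: eq_bigr => j _.
under eq_fun do rewrite natrM.
by rewrite expectZ expect_Nk.
Qed.

Lemma maxdeg_le_sum n (E : graph n) k :
  (maxdeg E <= k + \sum_(k <= j < n.+1) j * Nk E j)%N.
Proof.
case: (leqP k (maxdeg E)) => H.
  by apply: leq_trans (maxdeg_sum H) _; rewrite leq_addl.
by apply: leq_trans (ltnW H) _; rewrite leq_addr.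
Qed.

Lemma ln1q (R : realType) (q : R) : 0 < q -> ln (1 / q) = - ln q.
Proof. by move=> h; rewrite div1r lnV // posrE. Qed.

Section Ar.
Variable R : realType.
Implicit Types a e eps x L : R.
Lemma are1 a eps : 0 < a -> 0 < eps -> 0 < eps / (1 + 2 * a * eps).
Proof. by move=> h1 h2; rewrite divr_gt0 // addr_gt0 // !mulr_gt0. Qed.
Lemma are2 a eps : 0 < a -> 0 < eps -> eps / (1 + 2 * a * eps) <= eps.
Proof.
move=> h1 h2; have h3 : 0 < 2 * a * eps by rewrite !mulr_gt0.
rewrite ler_pdivrMr ?addr_gt0 // mulrDr mulr1 lerDl; exact: ltW (mulr_gt0 _ _).
Qed.
Lemma are3 a eps : 0 < a -> 0 < eps -> eps / (1 + 2 * a * eps) * (2 * a) <= 1.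
Proof.
move=> h1 h2; have h3 : 0 < 2 * a * eps by rewrite !mulr_gt0.
rewrite mulrAC ler_pdivrMr ?addr_gt0 // mul1r mulrC; lra.
Qed.
Lemma arc0 a e : 0 < a -> 0 < e -> 1 < (1 / a + e) * a.
Proof.
move=> h1 h2; rewrite mulrDl mul1r mulVf ?lt0r_neq0 //.
by rewrite ltrDl mulr_gt0.
Qed.
Lemma arc1 a e : 0 < a -> 0 < e -> e * (2 * a) <= 1 -> 0 < 1 / a - e.
Proof.
move=> h1 h2 h3; have h4 : 0 < e * a by rewrite mulr_gt0.
have h5 : e * a < 1 by lra.
by rewrite subr_gt0 ltr_pdivlMr // mulrC.
Qed.
Lemma arc2 a e : 0 < a -> 0 < e -> (1 / a - e) * a < 1.
Proof.
move=> h1 h2; rewrite mulrBl mul1r mulVf ?lt0r_neq0 //.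
by rewrite ltrBlDr ltrDl mulr_gt0.
Qed.
Lemma arup a e x L : 0 < L -> e < x / L - 1 / a -> (1 / a + e) * L < x.
Proof. by move=> h1; rewrite ltrBrDl -ltr_pdivlMr // addrC. Qed.
Lemma arlo a e x L : 0 < L -> e < - (x / L - 1 / a) -> x < (1 / a - e) * L.
Proof. by move=> h1; rewrite opprB ltrBrDl -ltrBrDr -ltr_pdivrMr. Qed.
Lemma arf1 eps : 0 < eps -> 0 < eps / (1 + eps).
Proof. by move=> h; rewrite divr_gt0 // addr_gt0. Qed.
Lemma arf2 eps : 0 < eps -> eps / (1 + eps) <= eps.
Proof. move=> h; rewrite ler_pdivrMr ?addr_gt0 //; nra. Qed.
Lemma arf3 eps : 0 < eps -> eps / (1 + eps) < 1.
Proof. move=> h; rewrite ltr_pdivrMr ?addr_gt0 //; lra. Qed.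
Lemma arg0 a e : 0 < a -> 0 < e -> 1 < (1 + e / 2) / a * a.
Proof. move=> h1 h2; rewrite divfK ?lt0r_neq0 //; lra. Qed.
Lemma arg1 a e : 0 < a -> e < 1 -> 0 < (1 - e / 2) / a.
Proof. move=> h1 h2; rewrite divr_gt0 //; lra. Qed.
Lemma arg2 a e : 0 < a -> 0 < e -> (1 - e / 2) / a * a < 1.
Proof. move=> h1 h2; rewrite divfK ?lt0r_neq0 //; lra. Qed.
Lemma arfin X L a e p : 0 < L -> 0 < a -> 0 < e -> e < 1 -> 4 * a / e <= L ->
  X <= (1 + e / 2) / a * L + 2 -> (1 - e / 2) / a * L * (1 - p) <= X ->
  0 <= p -> p <= e / 2 -> `|1 - X / (L / a)| <= e.
Proof.
move=> hL ha he he1 hL4 hup hlo hp0 hp1.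
have -> : X / (L / a) = X * a / L by rewrite invf_div mulrA.
set Y := X * a / L.
have hup' : Y <= 1 + e / 2 + 2 * a / L.
  rewrite /Y ler_pdivrMr //.
  have := ler_wpM2r (ltW ha) hup.
  rewrite (_ : ((1 + e / 2) / a * L + 2) * a = (1 + e / 2) * L + 2 * a); last first.
    by field; rewrite lt0r_neq0.
  rewrite (_ : (1 + e / 2 + 2 * a / L) * L = (1 + e / 2) * L + 2 * a) //.
  by field; rewrite lt0r_neq0.
have h2a : 2 * a / L <= e / 2.
  rewrite ler_pdivrMr //.
  move: hL4; rewrite ler_pdivrMr // => h.
  nra.
have hlo' : (1 - e / 2) * (1 - p) <= Y.
  rewrite /Y ler_pdivlMr //.
  have := ler_wpM2r (ltW ha) hlo.
  rewrite (_ : (1 - e / 2) / a * L * (1 - p) * a = (1 - e / 2) * (1 - p) * L) //.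
  by field; rewrite lt0r_neq0.
rewrite ler_norml; apply/andP; split; nra.
Qed.
End Ar.

Section Final.
Variables (R : realType) (P : forall n : nat, {ffun graph n -> R}) (dbar : nat -> R) (q : R).
Hypothesis HP : forall n, (1 <= n)%N -> random_graph (P n).
Hypothesis Hq : 0 < q < 1.
Hypothesis Hpos : exists K, forall k, (K <= k)%N -> 0 < dbar k.
Hypothesis Hlog : (fun k => ln (dbar k) / (k%:R * ln q)) @ \oo --> (1:R).
Hypothesis H2a : forall C : R, 0 < C -> forall eps : R, 0 < eps ->
     exists N K : nat, forall n k, (N <= n)%N -> (K <= k)%N ->
       k%:R <= C * ln n%:R ->
       `|dnk (P n) k - dbar k| <= eps * dbar k.
Hypothesis H2b : forall C : R, 0 < C -> forall eps : R, 0 < eps ->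
     exists N K : nat, forall n k l, (N <= n)%N -> (K <= k)%N -> (K <= l)%N ->
       k%:R <= C * ln n%:R -> l%:R <= C * ln n%:R ->
       `|dnkl (P n) k l - dbar k * dbar l| <= eps * (dbar k * dbar l).
Hypothesis H3 : exists qbar : R, 0 < qbar < 1 /\ exists M : R,
     (forall n k, (1 <= n)%N -> (1 <= k)%N -> `|dnk (P n) k| <= M * qbar ^+ k) /\
     (forall n k l, (1 <= n)%N -> (1 <= k)%N -> (1 <= l)%N ->
        `|dnkl (P n) k l| <= M * qbar ^+ (k + l)).

Lemma part1 : forall eps : R, 0 < eps ->
     (fun n => prob (P n) (fun E =>
        eps < `|(maxdeg E)%:R / ln n%:R - 1 / ln (1 / q)|)) @ \oo --> (0:R).
Proof.
move=> eps Heps.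
have Hq0 : 0 < q by case/andP: Hq.
rewrite ln1q //.
have Ha : 0 < - ln q := a_gt0 Hq.
move: Ha; set a := - ln q => Ha.
have He0 := are1 Ha Heps; have Hee := are2 Ha Heps; have He2 := are3 Ha Heps.
move: He0 Hee He2; set e := eps / _ => He0 Hee He2.
have Hc0 := arc0 Ha He0.
have Hc1p := arc1 Ha He0 He2.
have Hc1 := arc2 Ha He0.
apply: ev_cvg => eta Heta.
have Heta2 : 0 < eta / 2 by rewrite divr_gt0.
have [N1 HN1] := up HP Hq Hpos Hlog H2a H3 Hc0 Heta2.
have [N2 HN2] := low HP Hq Hpos Hlog H2a H2b Hc1p Hc1 Heta2.
have [N3 HN3] := ev_ln (R := R) 1.
exists (maxn (maxn N1 N2) (maxn N3 1)) => n.
rewrite !geq_max => /andP[/andP[HnN1 HnN2] /andP[HnN3 Hn1]].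
have HPn := HP Hn1.
set L := ln n%:R.
have HL : 1 <= L by apply: HN3.
have HL0 : 0 < L by apply: lt_le_trans HL.
have HS := HN1 n HnN1; have Hlo := HN2 n HnN2.
move: HS Hlo; rewrite -/L.
set k0 := (Num.trunc ((1 / a + e) * L)).+1.
set k1 := (Num.trunc ((1 / a - e) * L)).+1 => HS Hlo.
rewrite sub0r normrN ger0_norm ?prob_ge0 //.
apply: le_trans (prob_le_expect HPn
  (f := fun E => (\sum_(k0 <= j < n.+1) (j * Nk E j))%:R + (maxdeg E < k1)%:R) _ _) _.
- by move=> E; rewrite addr_ge0.
- move=> E HE.
  have HE' : e < `|(maxdeg E)%:R / L - 1 / a| := le_lt_trans Hee HE.
  move: HE'; rewrite ltr_normr => /orP[H|H].
  + have H1 := arup HL0 H.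
    have Hk : (k0 <= maxdeg E)%N.
      rewrite /k0 -(ltr_nat R); apply: le_lt_trans H1.
      rewrite truncn_le; apply: ltW; apply: mulr_gt0 => //.
      by apply: addr_gt0 => //; rewrite divr_gt0.
    have := maxdeg_sum Hk => Hs.
    have Hs1 : (1 <= \sum_(k0 <= j < n.+1) j * Nk E j)%N.
      by apply: leq_trans Hs; apply: leq_trans Hk.
    apply: le_trans (_ : (\sum_(k0 <= j < n.+1) (j * Nk E j))%:R <= _).
      by rewrite ler1n.
    by rewrite lerDl.
  + have H1 := arlo HL0 H.
    have Hk : (maxdeg E < k1)%N.
      rewrite -(ltr_nat R); apply: lt_trans H1 _; exact: truncnS_gt.
    by rewrite Hk lerDr.
- rewrite expectD expect_S // -prob_expect.
  apply: le_trans (lerD HS Hlo) _.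
  by rewrite [X in _ <= X](splitr eta).
Qed.

Lemma part2 :
  (fun n => expect (P n) (fun E => (maxdeg E)%:R) / (ln n%:R / ln (1 / q)))
     @ \oo --> (1:R).
Proof.
have Hq0 : 0 < q by case/andP: Hq.
rewrite ln1q //.
have Ha : 0 < - ln q := a_gt0 Hq.
apply: ev_cvg => eps Heps.
have He0 := arf1 Heps; have Hee := arf2 Heps; have He1 := arf3 Heps.
move: He0 Hee He1; set e := eps / _ => He0 Hee He1.
have Hc0 := arg0 Ha He0.
have Hc1p := arg1 Ha He1.
have Hc1 := arg2 Ha He0.
have He2 : 0 < e / 2 by rewrite divr_gt0.
have [N1 HN1] := up HP Hq Hpos Hlog H2a H3 Hc0 ltr01.
have [N2 HN2] := low HP Hq Hpos Hlog H2a H2b Hc1p Hc1 He2.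
have [N3 HN3] := ev_ln (R := R) 1.
have [N4 HN4] := ev_ln (4 * (- ln q) / e).
exists (maxn (maxn N1 N2) (maxn (maxn N3 N4) 1)) => n.
rewrite !geq_max => /andP[/andP[HnN1 HnN2] /andP[/andP[HnN3 HnN4] Hn1]].
have HPn := HP Hn1.
set L := ln n%:R.
have HL : 1 <= L by apply: HN3.
have HL0 : 0 < L by apply: lt_le_trans HL.
have HL4 : 4 * (- ln q) / e <= L by apply: HN4.
have HS := HN1 n HnN1; have Hlo := HN2 n HnN2.
move: HS Hlo; rewrite -/L.
set c0 := (1 + e / 2) / - ln q; set c1 := (1 - e / 2) / - ln q.
set k0 := (Num.trunc (c0 * L)).+1.
set k1 := (Num.trunc (c1 * L)).+1 => HS Hlo.
set p := prob _ _ in Hlo.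
have Hp0 : 0 <= p by apply: prob_ge0.
apply: (le_trans _ Hee).
apply: (arfin (p := p) HL0 Ha He0 He1 HL4).
- apply: le_trans (_ : expect (P n) (fun E =>
      k0%:R + (\sum_(k0 <= j < n.+1) (j * Nk E j))%:R) <= _).
    apply: expect_le => // E; rewrite -natrD ler_nat; exact: maxdeg_le_sum.
  rewrite expectD expect_cst // expect_S //.
  have Hk0 : k0%:R <= c0 * L + 1.
    rewrite /k0 -natr1 lerD2r truncn_le; apply: ltW; apply: mulr_gt0 => //.
    by rewrite /c0 divr_gt0 // addr_gt0.
  have := lerD Hk0 HS; rewrite -addrA; exact.
- apply: le_trans (_ : k1%:R * (1 - p) <= _).
    rewrite ler_pM2r; last by rewrite subr_gt0; apply: le_lt_trans Hlo _; rewrite ltr_pdivrMr //; lra.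
    apply: ltW; exact: truncnS_gt.
  apply: le_trans (_ : expect (P n) (fun E => k1%:R + (- k1%:R) * (maxdeg E < k1)%:R) <= _).
    by rewrite expectD expect_cst // expectZ -prob_expect mulrBr mulr1 mulNr.
  apply: expect_le => // E.
  case: ltnP => H /=; first by rewrite mulr1 subrr.
  by rewrite mulr0 addr0 ler_nat.
- exact: Hp0.
- exact: Hlo.
Qed.

End Final.


Unset Implicit Arguments.

Theorem theorem1 (R : realType)
  (P : forall n : nat, {ffun graph n -> R})
  (dbar : nat -> R) (q : R)
  (HP : forall n, (1 <= n)%N -> random_graph (P n))
  (* 1. limiting degree distribution with log dbar_k ~ k log q *)
  (Hq : 0 < q < 1)
  (Hdbar0 : forall k, (1 <= k)%N -> 0 <= dbar k)
  (Hdbar1 : (fun N => \sum_(1 <= k < N) dbar k) @ \oo --> (1:R))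
  (Hlim : forall k, (1 <= k)%N -> (fun n => dnk (P n) k) @ \oo --> dbar k)
  (Hpos : exists K, forall k, (K <= k)%N -> 0 < dbar k)
  (Hlog : (fun k => ln (dbar k) / (k%:R * ln q)) @ \oo --> (1:R))
  (* 2. uniform asymptotics for k, l <= C log n *)
  (H2a : forall C : R, 0 < C -> forall eps : R, 0 < eps ->
     exists N K : nat, forall n k, (N <= n)%N -> (K <= k)%N ->
       k%:R <= C * ln n%:R ->
       `|dnk (P n) k - dbar k| <= eps * dbar k)
  (H2b : forall C : R, 0 < C -> forall eps : R, 0 < eps ->
     exists N K : nat, forall n k l, (N <= n)%N -> (K <= k)%N -> (K <= l)%N ->
       k%:R <= C * ln n%:R -> l%:R <= C * ln n%:R ->
       `|dnkl (P n) k l - dbar k * dbar l| <= eps * (dbar k * dbar l))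
  (* 3. uniform exponential tail bounds *)
  (H3 : exists qbar : R, 0 < qbar < 1 /\ exists M : R,
     (forall n k, (1 <= n)%N -> (1 <= k)%N -> `|dnk (P n) k| <= M * qbar ^+ k) /\
     (forall n k l, (1 <= n)%N -> (1 <= k)%N -> (1 <= l)%N ->
        `|dnkl (P n) k l| <= M * qbar ^+ (k + l))) :
  (forall eps : R, 0 < eps ->
     (fun n => prob (P n) (fun E =>
        eps < `|(maxdeg E)%:R / ln n%:R - 1 / ln (1 / q)|)) @ \oo --> (0:R))
  /\
  (fun n => expect (P n) (fun E => (maxdeg E)%:R) / (ln n%:R / ln (1 / q)))
     @ \oo --> (1:R).
Proof.
split.
- exact: (part1 HP Hq Hpos Hlog H2a H2b H3).
- exact: (part2 HP Hq Hpos Hlog H2a H2b H3).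
Qed.
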